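(* Let $C$ and $D$ be $R$-linear codes of length $n$. Then \[ \mathrm{CJ}^{\mathrm{av}}_{C,D}(x_{ij}\ \text{with}\ i,j\in K)=\sum_{\eta}A_r^C\,A_s^D\,\frac{\prod_{i=0}^{|R|-1}\binom{s_i}{\eta_{\omega_0\omega_i},\dots,\eta_{\omega_{|R|-1}\omega_i}}}{\binom{n}{r_0,\dots,r_{|R|-1}}}\prod_{i,j=0}^{|R|-1}x_{ij}^{\eta_{\omega_i\omega_j}}. \] The sum runs over all bi-compositions $\eta=(\eta_{\alpha\beta})_{(\alpha,\beta)\in R^2}$ of $n$, i.e. non-negative integers with $\sum_{\alpha,\beta}\eta_{\alpha\beta}=n$. For each $\eta$, the compositions $r,s$ of $n$ are determined by \[ r_i=\sum_{\beta\in R}\eta_{\omega_i\beta},\qquad s_i=\sum_{\alpha\in R}\eta_{\alpha\omega_i}\qquad (i\in K). \]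
   Context: $R$ denotes either the finite field $\mathbb F_q$ or the ring $\mathbb Z_k$ ($k\ge2$). Its elements are listed in a fixed order $0=\omega_0,\dots,\omega_{|R|-1}$, and $K=\{0,\dots,|R|-1\}$. An $R$-linear code of length $n$ is an $\mathbb F_q$-subspace of $\mathbb F_q^n$, respectively an additive subgroup of $\mathbb Z_k^n$. A composition of $n$ is a vector $s=(s_0,\dots,s_{|R|-1})$ of non-negative integers summing to $n$. For $u\in R^n$, $\mathrm{comp}(u)=(s_0(u),\dots,s_{|R|-1}(u))$, where $s_i(u)$ is the number of coordinates of $u$ equal to $\omega_i$. $A_s^C$ denotes the number of $u\in C$ with $\mathrm{comp}(u)=s$. For $u,v\in R^n$, $\eta_{\alpha\beta}(u,v)=\#\{i:(u_i,v_i)=(\alpha,\beta)\}$. The complete joint weight enumerator is \[ \mathrm{CJE}_{C,D}(x_{ij})=\sum_{u\in C,v\in D}\prod_{i,j}x_{ij}^{\eta_{\omega_i\omega_j}(u,v)}. \] For $\sigma\in S_n$, set $u^\sigma=(u_{\sigma(1)},\dots,u_{\sigma(n)})$ and $C^\sigma=\{u^\sigma:u\in C\}$. The average complete joint weight enumerator is \[ \mathrm{CJ}^{\mathrm{av}}_{C,D}(x_{ij})=\frac1{n!}\sum_{\sigma\in S_n}\mathrm{CJE}_{C^\sigma,D}(x_{ij}). \] The multinomial coefficient is $\binom{a}{b_0,\dots,b_m}=a!/(b_0!\cdots b_m!)$. *)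

(* Defs.v *)
From HB Require Import structures.
From mathcomp Require Import all_boot all_order all_algebra all_fingroup.
From mathcomp Require Import mpoly.
Set Implicit Arguments. Unset Strict Implicit. Unset Printing Implicit Defensive.
Import GRing.Theory.
Local Open Scope ring_scope.

Definition field_or_Zk (R : finComUnitRingType) : Prop :=
  (forall x : R, x != 0 -> x \is a GRing.unit) \/
  (exists k : nat, (1 < k)%N /\
     exists f : {rmorphism 'Z_k -> R}, bijective f).

(* R-linear code: F_q-subspace resp. additive subgroup of Z_k^n; in both
   cases exactly an R-submodule of R^n. *)
Definition linear_code (R : finComUnitRingType) (n : nat) (C : {set 'rV[R]_n}) : Prop :=
  [/\ (0 : 'rV[R]_n) \in C,
      forall u v, u \in C -> v \in C -> u + v \in C &
      forall (a : R) u, u \in C -> a *: u \in C].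

Definition compo (R : finComUnitRingType) (n : nat) (u : 'rV[R]_n) (a : R) : nat :=
  #|[set i : 'I_n | u ord0 i == a]|.

Definition A_comp (R : finComUnitRingType) (n : nat) (C : {set 'rV[R]_n})
  (s : R -> nat) : nat :=
  #|[set u in C | [forall a, compo u a == s a]]|.

Definition eta (R : finComUnitRingType) (n : nat) (u v : 'rV[R]_n) (a b : R) : nat :=
  #|[set i : 'I_n | (u ord0 i == a) && (v ord0 i == b)]|.

(* the variable x_{ij} attached to the pair (omega_i, omega_j) *)
Definition xvar (R : finComUnitRingType) (a b : R) : {mpoly rat[#|{: R * R}|]} :=
  'X_(enum_rank (a, b)).

Definition CJE (R : finComUnitRingType) (n : nat) (C D : {set 'rV[R]_n})
  : {mpoly rat[#|{: R * R}|]} :=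
  \sum_(u in C) \sum_(v in D) \prod_(p : R * R) xvar p.1 p.2 ^+ eta u v p.1 p.2.

Definition permrow (R : finComUnitRingType) (n : nat) (s : 'S_n) (u : 'rV[R]_n)
  : 'rV[R]_n := \row_i u ord0 (s i).
Definition permcode (R : finComUnitRingType) (n : nat) (s : 'S_n) (C : {set 'rV[R]_n})
  : {set 'rV[R]_n} := [set permrow s u | u in C].

Definition CJav (R : finComUnitRingType) (n : nat) (C D : {set 'rV[R]_n})
  : {mpoly rat[#|{: R * R}|]} :=
  (n`!%:R : rat)^-1 *: \sum_(s : 'S_n) CJE (permcode s C) D.

Definition multinom (I : finType) (a : nat) (b : I -> nat) : rat :=
  (a`!)%:R / (\prod_(i : I) ((b i)`!)%:R).

Definition bicomp (R : finComUnitRingType) (n : nat) (e : {ffun R * R -> 'I_n.+1}) : bool :=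
  (\sum_(p : R * R) (e p : nat))%N == n.

Definition rowsum (R : finComUnitRingType) (n : nat) (e : {ffun R * R -> 'I_n.+1}) (a : R) : nat :=
  (\sum_(b : R) (e (a, b) : nat))%N.
Definition colsum (R : finComUnitRingType) (n : nat) (e : {ffun R * R -> 'I_n.+1}) (b : R) : nat :=
  (\sum_(a : R) (e (a, b) : nat))%N.

Definition CJav_formula (R : finComUnitRingType) (n : nat) (C D : {set 'rV[R]_n})
  : {mpoly rat[#|{: R * R}|]} :=
  \sum_(e : {ffun R * R -> 'I_n.+1} | bicomp e)
    ((((A_comp C (rowsum e))%:R * (A_comp D (colsum e))%:R : rat)
      * (\prod_(b : R) multinom (colsum e b) (fun a => (e (a, b) : nat)))
      / multinom n (rowsum e))
     *: \prod_(p : R * R) xvar p.1 p.2 ^+ (e p : nat)).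

(* Main.v *)
Require Import Defs.
From mathcomp Require Import all_boot all_order all_algebra all_fingroup.
From mathcomp Require Import mpoly.
From mathcomp Require Import zify.
Set Implicit Arguments. Unset Strict Implicit. Unset Printing Implicit Defensive.

Lemma cardsum (T : finType) (Q : pred T) : #|[set i | Q i]| = \sum_i (Q i : nat).
Proof. by rewrite -sum1dep_card big_mkcond /=; apply: eq_bigr => i _; case: (Q i). Qed.

Definition consf (A : finType) n (x : A) (w : {ffun 'I_n -> A}) : {ffun 'I_n.+1 -> A} :=
  [ffun i => if unlift ord0 i is Some j then w j else x].

Lemma consf0 (A : finType) n (x : A) w : @consf A n x w ord0 = x.
Proof. by rewrite ffunE unlift_none. Qed.
Lemma consfS (A : finType) n (x : A) w j : @consf A n x w (lift ord0 j) = w j.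
Proof. by rewrite ffunE liftK. Qed.

Lemma sum_ffunS (A : finType) n (F : {ffun 'I_n.+1 -> A} -> nat) :
  \sum_w F w = \sum_x \sum_(w : {ffun 'I_n -> A}) F (consf x w).
Proof.
rewrite pair_big /= [LHS](reindex (fun p : A * {ffun 'I_n -> A} => consf p.1 p.2)) //=.
exists (fun w => (w ord0, [ffun j => w (lift ord0 j)])).
- move=> [x w] _ /=; rewrite consf0; congr pair; apply/ffunP=> j; by rewrite ffunE consfS.
- move=> w _ /=; apply/ffunP => i; rewrite ffunE; case: unliftP => [j ->|->]; by rewrite ?ffunE.
Qed.

Definition cntw (A B : finType) n (v : 'I_n -> B) (e : A * B -> nat) :=
  #|[set w : {ffun 'I_n -> A} | [forall p, #|[set i | (w i == p.1) && (v i == p.2)]| == e p]]|.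

Lemma Gcount (A B : finType) n (v : 'I_n -> B) (e : A * B -> nat) :
  (forall b, \sum_a e (a, b) = #|[set i | v i == b]|) ->
  cntw v e * \prod_p (e p)`! = \prod_b (#|[set i | v i == b]|)`!.
Proof.
elim: n v e => [|n IH] v e he.
  have e0 : forall p, e p = 0.
    move=> [a b]; have := he b; rewrite cardsum big_ord0 => /eqP.
    rewrite sum_nat_eq0 => /forallP /(_ a) /=; by move/eqP.
  rewrite /cntw.
  have -> : [set w : {ffun 'I_0 -> A} | [forall p, #|[set i | (w i == p.1) && (v i == p.2)]| == e p]] = setT.
    apply/setP => w; rewrite !inE; apply/forallP => p; by rewrite cardsum big_ord0 e0.
  rewrite cardsT card_ffun card_ord expn0 mul1n.
  by rewrite !big1 // => p _; rewrite ?e0 // cardsum big_ord0.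
set b0 := v ord0; set v' := fun j => v (lift ord0 j).
have hcard : forall (Q : pred 'I_n.+1), #|[set i | Q i]| = Q ord0 + #|[set j | Q (lift ord0 j)]|.
  by move=> Q; rewrite !cardsum big_ord_recl.
pose ex x p := e p - ((x, b0) == p).
have step : cntw v e = \sum_(x | 0 < e (x, b0)) cntw v' (ex x).
  rewrite /cntw cardsum sum_ffunS [RHS]big_mkcond /=; apply: eq_bigr => x _.
  have hc : forall w p, #|[set i | (consf x w i == p.1) && (v i == p.2)]| =
      ((x, b0) == p) + #|[set j | (w j == p.1) && (v' j == p.2)]|.
    move=> w [a b]; rewrite hcard consf0 xpair_eqE /=; congr addn.
    by apply: eq_card => j; rewrite !inE consfS.
  case: (posnP (e (x, b0))) => [ez|ep] /=.
    apply: big1 => w _; case: forallP => // /(_ (x, b0)); by rewrite hc eqxx ez.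
  rewrite cardsum; apply: eq_bigr => w _.
  f_equal; apply/forallP/forallP => H p; have /eqP H' := H p; apply/eqP; rewrite ?hc /ex in H' *;
    case: (eqVneq (x, b0) p) => [<-|ne] in H' *; rewrite ?eqxx ?(negbTE ne) /= in H' *; lia.
rewrite step big_distrl /=.
have hv : forall b, #|[set i | v i == b]| = (b0 == b) + #|[set j | v' j == b]|.
  by move=> b; rewrite hcard.
transitivity (\sum_(x | 0 < e (x, b0)) e (x, b0) * \prod_b (#|[set j | v' j == b]|)`!).
  apply: eq_bigr => x ex0.
  have he' : forall b, \sum_a ex x (a, b) = #|[set j | v' j == b]|.
    move=> b; have := he b; rewrite hv /ex.
    case: (eqVneq b0 b) => [<-|nb] /=.
      move=> h; rewrite (bigD1 x) //= eqxx; rewrite (bigD1 x) //= in h.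
      rewrite (eq_bigr (fun a => e (a, b0))); first by move: h; lia.
      by move=> a ax; rewrite xpair_eqE eq_sym (negbTE ax) subn0.
    rewrite add0n => <-; apply: eq_bigr => a _.
    by rewrite xpair_eqE eq_sym (negbTE nb) andbF subn0.
  rewrite -(IH v' (ex x) he') mulnCA; congr muln.
  rewrite (bigD1 (x, b0)) //= [in RHS](bigD1 (x, b0)) //= mulnA; congr muln.
    by rewrite /ex eqxx -(prednK ex0) factS subn1.
  by apply: eq_bigr => p pn; rewrite /ex eq_sym (negbTE pn) subn0.
rewrite -big_distrl /=.
have -> : \sum_(x | 0 < e (x, b0)) e (x, b0) = \sum_x e (x, b0).
  rewrite [RHS](bigID (fun x => 0 < e (x, b0))) /= [X in _ = _ + X]big1 ?addn0 // => x.
  by rewrite lt0n negbK => /eqP.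
rewrite he hv eqxx (bigD1 b0) //= [RHS](bigD1 b0) //= hv eqxx mulnA factS; congr muln.
by apply: eq_bigr => b nb; rewrite hv eq_sym (negbTE nb).
Qed.

Lemma cnt_card (T : eqType) n (f : 'I_n -> T) a :
  count_mem a [tuple f i | i < n] = #|[set i | f i == a]|.
Proof.
rewrite /= count_map cardsE /= cardE /enum_mem size_filter count_filter.
by apply: eq_count => x /=; rewrite andbT.
Qed.

Definition Pe (R : finComUnitRingType) n (w v : 'rV[R]_n) (e : R * R -> nat) :=
  [forall p, eta w v p.1 p.2 == e p].

Lemma card_rows (T : finType) n (P : pred 'rV[T]_n) :
  #|[set w | P w]| = #|[set f : {ffun 'I_n -> T} | P (\row_i f i)%R]|.
Proof.
rewrite -(card_imset _ (f := fun f : {ffun 'I_n -> T} => (\row_i f i)%R)); last first.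
  move=> f g /rowP H; apply/ffunP => i; have := H i; by rewrite !mxE.
congr #|pred_of_set _|; apply/setP => w; rewrite inE; apply/idP/imsetP => [Pw|[f]]; last first.
  by rewrite inE => Pf ->.
have ew : (\row_i [ffun i => w ord0 i] i)%R = w.
  by apply/rowP => i; rewrite mxE ffunE; congr (w _ _); apply/val_inj; case: (0 : 'I_1) => [[]].
by exists [ffun i => w ord0 i]; rewrite ?inE ew.
Qed.

Lemma eta_row (R : finComUnitRingType) n (f : {ffun 'I_n -> R}) v a b :
  eta (\row_i f i)%R v a b = #|[set i | (f i == a) && (v ord0 i == b)]|.
Proof. by apply: eq_card => i; rewrite !inE mxE. Qed.

Lemma W_cnt (R : finComUnitRingType) n (v : 'rV[R]_n) e :
  #|[set w | Pe w v e]| = cntw (fun i => v ord0 i) e.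
Proof.
rewrite card_rows /cntw; apply: eq_card => f; rewrite !inE; apply: eq_forallb => p.
by rewrite eta_row.
Qed.

Lemma permrow_inj (R : finComUnitRingType) n (s : 'S_n) : injective (@permrow R n s).
Proof.
move=> u w H; apply/rowP => i; have := congr1 (fun m : 'rV[R]_n => m ord0 (s^-1 i)%g) H.
by rewrite /= !mxE permKV.
Qed.

Lemma permrowM (R : finComUnitRingType) n (s t : 'S_n) (u : 'rV[R]_n) :
  permrow s (permrow t u) = permrow (s * t)%g u.
Proof. by apply/rowP => i; rewrite !mxE permM. Qed.

Lemma compo_perm (R : finComUnitRingType) n (s : 'S_n) (u : 'rV[R]_n) a :
  compo (permrow s u) a = compo u a.
Proof.
rewrite /compo -[RHS](card_preimset _ (@perm_inj _ s)).
by apply: eq_card => i; rewrite !inE mxE.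
Qed.

Lemma sum_pred1 (T : finType) (x : T) (Q : bool) : \sum_b (((x == b) && Q) : nat) = Q.
Proof.
rewrite (bigD1 x) //= eqxx big1 ?addn0 // => b nb.
by rewrite eq_sym (negbTE nb).
Qed.

Lemma compo_eta (R : finComUnitRingType) n (w v : 'rV[R]_n) a :
  compo w a = \sum_b eta w v a b.
Proof.
rewrite /compo cardsum (eq_bigr (fun b => \sum_i (((w ord0 i == a) && (v ord0 i == b)) : nat)));
  last by move=> b _; rewrite /eta cardsum.
rewrite exchange_big /=; apply: eq_bigr => i _.
by rewrite -(sum_pred1 (v ord0 i)); apply: eq_bigr => b _; rewrite andbC.
Qed.

Lemma compo_eta2 (R : finComUnitRingType) n (w v : 'rV[R]_n) b :
  compo v b = \sum_a eta w v a b.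
Proof.
rewrite /compo cardsum (eq_bigr (fun a => \sum_i (((w ord0 i == a) && (v ord0 i == b)) : nat)));
  last by move=> a _; rewrite /eta cardsum.
rewrite exchange_big /=; apply: eq_bigr => i _.
by rewrite -(sum_pred1 (w ord0 i)).
Qed.

Lemma sum_compo (R : finComUnitRingType) n (w : 'rV[R]_n) : \sum_a compo w a = n.
Proof.
rewrite (eq_bigr (fun a => \sum_i ((w ord0 i == a) : nat))); last by move=> a _; rewrite /compo cardsum.
rewrite exchange_big /= -[RHS](card_ord n) -sum1_card; apply: eq_bigr => i _.
by rewrite (eq_bigr (fun b => (((w ord0 i == b) && true) : nat))) ?sum_pred1 // => b _; rewrite andbT.
Qed.

Lemma sum_eta (R : finComUnitRingType) n (w v : 'rV[R]_n) :
  \sum_p eta w v p.1 p.2 = n.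
Proof.
rewrite -(pair_bigA _ (fun a b => eta w v a b)) /= -[RHS](sum_compo w).
by apply: eq_bigr => a _; rewrite (compo_eta w v).
Qed.

Lemma eta_le (R : finComUnitRingType) n (w v : 'rV[R]_n) a b : eta w v a b < n.+1.
Proof. by rewrite ltnS -{2}(card_ord n) max_card. Qed.

Definition etaf (R : finComUnitRingType) n (w v : 'rV[R]_n) : {ffun R * R -> 'I_n.+1} :=
  [ffun p => inord (eta w v p.1 p.2)].

Lemma etafE (R : finComUnitRingType) n (w v : 'rV[R]_n) e :
  (etaf w v == e) = Pe w v (fun p => e p).
Proof.
apply/eqP/forallP => [<- p | H]; first by rewrite ffunE inordK ?eta_le.
apply/ffunP => p; apply: ord_inj; rewrite ffunE inordK ?eta_le //; exact/eqP/H.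
Qed.

Lemma bicomp_etaf (R : finComUnitRingType) n (w v : 'rV[R]_n) : bicomp (etaf w v).
Proof.
rewrite /bicomp (eq_bigr (fun p => eta w v p.1 p.2)) ?sum_eta //.
by move=> p _; rewrite ffunE inordK ?eta_le.
Qed.

Lemma Pe_compo (R : finComUnitRingType) n (w v : 'rV[R]_n) e a :
  Pe w v e -> compo w a = \sum_b e (a, b).
Proof. by move/forallP=> H; rewrite (compo_eta w v); apply: eq_bigr => b _; exact/eqP/(H (a, b)). Qed.

Lemma Pe_compo2 (R : finComUnitRingType) n (w v : 'rV[R]_n) e b :
  Pe w v e -> compo v b = \sum_a e (a, b).
Proof. by move/forallP=> H; rewrite (compo_eta2 w v); apply: eq_bigr => a _; exact/eqP/(H (a, b)). Qed.

Definition Nc (R : finComUnitRingType) n (u v : 'rV[R]_n) e :=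
  #|[set s : 'S_n | Pe (permrow s u) v e]|.
Definition Kc (R : finComUnitRingType) n (r : R -> nat) :=
  #|[set w : 'rV[R]_n | [forall a, compo w a == r a]]|.

Lemma N_inv (R : finComUnitRingType) n (u w v : 'rV[R]_n) e :
  (forall a, compo u a = compo w a) -> Nc u v e = Nc w v e.
Proof.
move=> H.
have hp : perm_eq [tuple w ord0 i | i < n] [tuple u ord0 i | i < n].
  apply/allP => x _; apply/eqP; rewrite !cnt_card; exact: (esym (H x)).
have [p hp'] := tuple_permP hp.
have ew : w = permrow p u.
  apply/rowP => i; rewrite mxE.
  have := congr1 (fun t => tnth t i) (val_inj hp'); rewrite /= !tnth_mktuple => <-.
  by congr (w _ _); apply: ord_inj.
rewrite ew /Nc -[LHS](card_preimset _ (mulIg p)); apply: eq_card => s.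
by rewrite !inE permrowM.
Qed.

Lemma N_sum (R : finComUnitRingType) n (v : 'rV[R]_n) e :
  \sum_(w in [set w : 'rV[R]_n | [forall a, compo w a == \sum_b e (a, b)]]) Nc w v e
  = n`! * #|[set w | Pe w v e]|.
Proof.
rewrite (eq_bigr (fun w => \sum_(s : 'S_n) (Pe (permrow s w) v e : nat))); last first.
  by move=> w _; rewrite /Nc cardsum.
rewrite exchange_big /= -card_Sn -sum_nat_const; apply: eq_bigr => s _.
rewrite -(card_preimset _ (@permrow_inj R n s)) cardsum [LHS]big_mkcond /=.
apply: eq_bigr => w _; rewrite !inE.
case h : (Pe (permrow s w) v e); last by case: ifP.
rewrite ifT; first by []. apply/forallP => a. rewrite -(compo_perm s). exact/eqP/(Pe_compo a h).
Qed.

Lemma N_K (R : finComUnitRingType) n (u v : 'rV[R]_n) e :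
  (forall a, compo u a = \sum_b e (a, b)) ->
  Nc u v e * Kc n (fun a => \sum_b e (a, b)) = n`! * #|[set w | Pe w v e]|.
Proof.
move=> hu; rewrite -(N_sum v e) /Kc.
rewrite (eq_bigr (fun _ => Nc u v e)); first by rewrite sum_nat_const mulnC.
move=> w; rewrite inE => /forallP H; apply: N_inv => a; by rewrite (eqP (H a)) hu.
Qed.

Lemma W_val (R : finComUnitRingType) n (v : 'rV[R]_n) e :
  (forall b, \sum_a e (a, b) = compo v b) ->
  #|[set w | Pe w v e]| * \prod_p (e p)`! = \prod_b (compo v b)`!.
Proof. by move=> H; rewrite W_cnt Gcount. Qed.

Lemma K_val (R : finComUnitRingType) n (r : R -> nat) :
  \sum_a r a = n -> Kc n r * \prod_a (r a)`! = n`!.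
Proof.
move=> hr.
have -> : Kc n r = cntw (fun _ : 'I_n => (0%R : R)) (fun p => if p.2 == 0%R then r p.1 else 0%N).
  rewrite /Kc card_rows /cntw; apply: eq_card => f; rewrite !inE.
  apply/forallP/forallP => [H [a b] | H a] /=.
    case: (eqVneq b 0%R) => [_|nb]; last first.
      by rewrite cards_eq0; apply/eqP/setP => i; rewrite !inE andbF.
    have := H a; rewrite /compo; congr (_ == _); apply: eq_card => i; by rewrite !inE mxE andbT.
  have := H (a, 0%R); rewrite /= !(@eqxx R) /compo; congr (_ == _); apply: eq_card => i; by rewrite !inE mxE andbT.
have := @Gcount R R n (fun _ : 'I_n => (0%R : R)) (fun p => if p.2 == 0%R then r p.1 else 0%N).
have hc : forall b : R, #|[set i : 'I_n | 0%R == b]| = if b == 0%R then n else 0%N.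
  move=> b; case: (eqVneq b 0%R) => [_|nb].
    by rewrite -[RHS](card_ord n); apply: eq_card => i; rewrite !inE.
  by apply/eqP; rewrite cards_eq0; apply/eqP/setP => i; rewrite !inE.
have hP : \prod_a (r a)`! = \prod_(p : R * R) (if p.2 == 0%R then r p.1 else 0%N)`!.
  transitivity (\prod_(a : R) \prod_(b : R) (if b == 0%R then r a else 0%N)`!); last by rewrite pair_bigA.
  apply: eq_bigr => a _.
  rewrite (bigD1 (0%R : R)) //= (@eqxx R) big1 ?muln1 // => b nb; by rewrite (negbTE nb).
move=> G; rewrite hP G.
- rewrite (bigD1 (0%R : R)) //= hc (@eqxx R) big1 ?muln1 // => b nb; by rewrite hc (negbTE nb).
- move=> b /=; rewrite hc; case: (eqVneq b 0%R) => // _; by rewrite big1.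
Qed.

Import GRing.Theory Num.Theory.
Local Open Scope ring_scope.

Lemma coefN (R : finComUnitRingType) n (u v : 'rV[R]_n) (e : {ffun R * R -> 'I_n.+1})
  (he : bicomp e) :
  ((Nc u v (fun p => e p))%:R / (n`!)%:R =
   (([forall a, compo u a == rowsum e a] : nat)%:R * ([forall b, compo v b == colsum e b] : nat)%:R) *
   ((\prod_b Defs.multinom (colsum e b) (fun a => (e (a, b) : nat))) / Defs.multinom n (rowsum e)) :> rat)%R.
Proof.
case: (boolP [forall a, compo u a == rowsum e a]) => hu; last first.
  have -> : Nc u v (fun p => e p) = 0%N.
    apply/eqP; rewrite cards_eq0; apply/eqP/setP => s; rewrite !inE; apply/negbTE/negP => h.
    move/negP: hu; apply; apply/forallP => a; apply/eqP; rewrite -(compo_perm s).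
    exact: Pe_compo a h.
  by rewrite /= !mul0r.
case: (boolP [forall b, compo v b == colsum e b]) => hv; last first.
  have -> : Nc u v (fun p => e p) = 0%N.
    apply/eqP; rewrite cards_eq0; apply/eqP/setP => s; rewrite !inE; apply/negbTE/negP => h.
    move/negP: hv; apply; apply/forallP => b; apply/eqP.
    exact: Pe_compo2 b h.
  by rewrite /= mulr0 !mul0r.
rewrite /= !mul1r.
have hu' : forall a, compo u a = rowsum e a by move=> a; exact/eqP/(forallP hu a).
have hv' : forall b, compo v b = colsum e b by move=> b; exact/eqP/(forallP hv b).
have hN := @N_K R n u v (fun p => e p) hu'.
have hW := @W_val R n v (fun p => e p) (fun b => esym (hv' b)).
have hr : (\sum_a rowsum e a)%N = n.
  by rewrite -[RHS](sum_compo u); apply: eq_bigr => a _; rewrite hu'.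
have hK := @K_val R n (rowsum e) hr.
set W := #|[set w | Pe w v (fun p => e p)]| in hN hW.
set K := Kc n (rowsum e) in hN hK.
set N := Nc u v (fun p => e p) in hN *.
have E0 : (\prod_p (e p)`!)%:R != 0 :> rat.
  by rewrite pnatr_eq0 -lt0n prodn_gt0 // => p; exact: fact_gt0.
have R0 : (\prod_a (rowsum e a)`!)%:R != 0 :> rat.
  by rewrite pnatr_eq0 -lt0n prodn_gt0 // => p; exact: fact_gt0.
have F0 : (n`!)%:R != 0 :> rat by rewrite pnatr_eq0 -lt0n fact_gt0.
have K0 : K%:R != 0 :> rat.
  rewrite pnatr_eq0; apply/eqP => K0; have := fact_gt0 n; by rewrite -hK K0.
have r1 : \prod_b Defs.multinom (colsum e b) (fun a => (e (a, b) : nat)) = W%:R :> rat.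
  rewrite /Defs.multinom prodf_div; under [X in _ / X]eq_bigr => b _ do rewrite -natr_prod.
  rewrite -!natr_prod.
  have -> : (\prod_b \prod_a (e (a, b))`! = \prod_p (e p)`!)%N.
    by rewrite exchange_big pair_bigA; apply: eq_bigr => -[a b] _.
  rewrite -(eq_bigr _ (fun b _ => congr1 factorial (hv' b))) -hW natrM mulfK //.
have r2 : Defs.multinom n (rowsum e) = K%:R :> rat.
  by rewrite /Defs.multinom -natr_prod -hK natrM mulfK.
rewrite r1 r2; apply/eqP; rewrite eqr_div //; apply/eqP; rewrite -!natrM; congr _%:R.
by rewrite hN mulnC.
Qed.

Lemma A_sum (R : finComUnitRingType) n (C : {set 'rV[R]_n}) (s : R -> nat) :
  A_comp C s = (\sum_(u in C) [forall a, compo u a == s a])%N.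
Proof.
rewrite /A_comp cardsum [RHS]big_mkcond; apply: eq_bigr => u _; by case: (u \in C).
Qed.

Theorem theorem3p1 (R : finComUnitRingType) (hR : field_or_Zk R) (n : nat)
  (C D : {set 'rV[R]_n}) (hC : linear_code C) (hD : linear_code D) :
  CJav C D = CJav_formula C D.
Proof.
rewrite /CJav /CJav_formula /CJE.
have eA : forall s : 'S_n,
    \sum_(u in permcode s C) \sum_(v in D) \prod_(p : R * R) xvar p.1 p.2 ^+ eta u v p.1 p.2 =
    \sum_(u in C) \sum_(v in D) \prod_(p : R * R) xvar p.1 p.2 ^+ eta (permrow s u) v p.1 p.2.
  move=> s; rewrite /permcode big_imset //= => x y _ _; exact: permrow_inj.
rewrite (eq_bigr _ (fun s _ => eA s)) exchange_big /=.
under eq_bigr => u _ do rewrite exchange_big /=.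
have eC : forall (u : 'rV[R]_n) (v : 'rV[R]_n),
    \sum_(s : 'S_n) \prod_(p : R * R) xvar p.1 p.2 ^+ eta (permrow s u) v p.1 p.2 =
    \sum_(e : {ffun R * R -> 'I_n.+1} | bicomp e) (Nc u v (fun p => e p))%:R *: \prod_(p : R * R) xvar p.1 p.2 ^+ (e p : nat).
  move=> u v; rewrite (partition_big (fun s => etaf (permrow s u) v) (@bicomp R n)) => [|s _]; last first.
    exact: bicomp_etaf.
  apply: eq_bigr => e _.
  rewrite (eq_bigl (fun s => Pe (permrow s u) v (fun p => e p))) => [|s]; last by rewrite /= etafE.
  rewrite (eq_bigr (fun _ => \prod_(p : R * R) xvar p.1 p.2 ^+ (e p : nat))) => [|s /forallP H]; last first.
    by apply: eq_bigr => p _; rewrite (eqP (H p)).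
  by rewrite sumr_const scaler_nat /Nc cardsE.
under eq_bigr => u _ do under eq_bigr => v _ do rewrite eC.
under eq_bigr => u _ do rewrite exchange_big /=.
rewrite exchange_big /= scaler_sumr; apply: eq_bigr => e he.
under eq_bigr => u _ do rewrite -scaler_suml.
rewrite -scaler_suml scalerA; congr (_ *: _).
transitivity (\sum_(u in C) \sum_(v in D) ((Nc u v (fun p => e p))%:R / (n`!)%:R : rat)).
  rewrite mulrC big_distrl /=; apply: eq_bigr => u _; by rewrite big_distrl.
transitivity (\sum_(u in C) \sum_(v in D)
   ((([forall a, compo u a == rowsum e a] : nat)%:R * ([forall b, compo v b == colsum e b] : nat)%:R) *
   ((\prod_b Defs.multinom (colsum e b) (fun a => (e (a, b) : nat))) / Defs.multinom n (rowsum e)) : rat)).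
  by apply: eq_bigr => u _; apply: eq_bigr => v _; exact: coefN.
rewrite -[RHS]mulrA.
rewrite !A_sum !natr_sum -[RHS]mulrA [RHS]big_distrl /=; apply: eq_bigr => u _.
rewrite [X in _ = _ * X]big_distrl /= [RHS]big_distrr /=; apply: eq_bigr => v _; by rewrite !mulrA.
Qed.
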